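(* Let $G$ be a graph with finite edge set $E(G)$, and let $x$ be fixed. Suppose $p(F,x)$, $F\subseteq E(G)$, are numbers for which there exist a finite measure space $(\Omega,\mathscr{A},\mu)$ and measurable sets $\{A_e\}_{e\in E(G)}$ with $\mu\big(\bigcap_{e\in F}A_e\big)=p(F,x)$ for every $F\subseteq E(G)$ (the empty intersection being $\Omega$), and let $$P(G,x)=\sum_{F\subseteq E(G)}(-1)^{|F|}p(F,x).$$ Call a pair $\{B,\{b\}\}$ with $B\subseteq E(G)$ and $b\in E(G)\setminus B$ a broken pair of $P(G,x)$ if $p(B,x)=p(B\cup\{b\},x)$. Let $\{B_1,B^*_1\},\dots,\{B_k,B^*_k\}$ be broken pairs of $P(G,x)$ (so each $B^*_i=\{b_i\}$ is a single edge not in $B_i$ with $p(B_i,x)=p(B_i\cup\{b_i\},x)$). For $i\in\{1,\dots,k\}$ put $$\mathscr{B}_i=\{F\subseteq E(G):\ F\supseteq B_i,\ \text{and } F\not\supseteq B_j\setminus B^*_i \text{ for every } j<i\},$$ and $\mathscr{B}=\mathscr{B}_1\cup\cdots\cup\mathscr{B}_k$. Then $$P(G,x)=\sum_{F\in 2^{E(G)}\setminus\mathscr{B}}(-1)^{|F|}p(F,x).$$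
   Context: $2^{E(G)}$ denotes the power set of $E(G)$. In the paper, a graph polynomial written in inclusion–exclusion form $P(G,x)=\sum_{F\subseteq E(G)}(-1)^{|F|}p(F,x)$ is interpreted by setting $\mu(\bigcap_{e\in F}A_e)=p(F,x)$; this representation is part of the hypotheses here. *)

(* Defs.v *)
From HB Require Import structures.
From mathcomp Require Import all_boot all_order all_algebra.
From mathcomp Require Import all_classical all_reals all_analysis.
Set Implicit Arguments. Unset Strict Implicit. Unset Printing Implicit Defensive.
Import Order.TTheory GRing.Theory Num.Theory.

(* The edge set E(G) is the finite type E; subsets F of E(G) are {set E}. *)

Definition incl_excl_poly (R : ringType) (E : finType) (X : Type)
  (p : {set E} -> X -> R) (x : X) : R :=
  (\sum_(F : {set E}) (-1) ^+ #|F| * p F x)%R.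

Definition broken_pair (R : ringType) (E : finType) (X : Type)
  (p : {set E} -> X -> R) (x : X) (B : {set E}) (b : E) : Prop :=
  b \notin B /\ p B x = p (b |: B) x.

Definition scriptB_i (E : finType) (k : nat) (B : 'I_k -> {set E}) (b : 'I_k -> E)
  (i : 'I_k) : {set {set E}} :=
  [set F : {set E} | (B i \subset F) &&
     [forall j : 'I_k, (j < i)%N ==> ~~ (B j :\ b i \subset F)]].

Definition scriptB (E : finType) (k : nat) (B : 'I_k -> {set E}) (b : 'I_k -> E)
  : {set {set E}} := \bigcup_(i : 'I_k) scriptB_i B b i.

(* Main.v *)
Require Import Defs.
From HB Require Import structures.
From mathcomp Require Import all_boot all_order all_algebra.
From mathcomp Require Import all_classical all_reals all_analysis.
Import Order.TTheory GRing.Theory Num.Theory.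
Local Open Scope ring_scope.
Local Open Scope classical_set_scope.

Lemma bigcapU1 (E : finType) T (A : E -> set T) (b : E) (F : {set E}) :
  \bigcap_(e in [set e | e \in b |: F]) A e =
  (\bigcap_(e in [set e | e \in F]) A e) `&` A b.
Proof.
apply/seteqP; split => t /=.
  move=> H; split; first by move=> e /= eF; apply: H; rewrite /= in_setU1 eF orbT.
  by apply: H; rewrite /= in_setU1 eqxx.
move=> [H1 H2] e /=; rewrite in_setU1 => /orP[/eqP -> //|eF]; exact: H1.
Qed.

Lemma bigcap_sub (E : finType) T (A : E -> set T) (B F : {set E}) :
  B \subset F ->
  \bigcap_(e in [set e | e \in F]) A e `<=` \bigcap_(e in [set e | e \in B]) A e.
Proof.
move=> /fintype.subsetP BF t H e /= eB; apply: H; exact: BF.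
Qed.

Lemma pinv (R : realType) (E : finType) (X : Type)
  (p : {set E} -> X -> R) (x : X)
  (d : measure_display) (T : measurableType d)
  (mu : {finite_measure set T -> \bar R}) (A : E -> set T)
  (hA : forall e, measurable (A e))
  (hmu : forall F : {set E},
     mu (\bigcap_(e in [set e | e \in F]) A e) = (p F x)%:E)
  (B0 : {set E}) (b0 : E) (hb : broken_pair p x B0 b0) (F : {set E}) :
  B0 \subset F -> p (b0 |: F) x = p F x.
Proof.
move=> BF.
have hmuC : forall G : {set E}, (mu : {content set T -> \bar R}) (\bigcap_(e in [set e | e \in G]) A e) = (p G x)%:E := hmu.
have mI : forall G : {set E}, measurable (\bigcap_(e in [set e | e \in G]) A e).
  by move=> G; apply: fin_bigcap_measurable; [exact: finite_finset| move=> e _; exact: hA].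
have D0 : mu ((\bigcap_(e in [set e | e \in B0]) A e) `\` A b0) = 0%E.
  rewrite measureD //; last by rewrite hmuC ltry.
  by rewrite -bigcapU1 !hmuC -(proj2 hb) subee.
have D1 : (mu : {content set T -> \bar R}) ((\bigcap_(e in [set e | e \in F]) A e) `\` A b0) = 0%E.
  apply/eqP; rewrite eq_le measure_ge0 andbT -D0.
  apply: le_measure; rewrite ?inE; try exact: measurableD.
  by apply: setSD; apply: bigcap_sub.
have := measureDI mu (mI F) (hA b0).
by rewrite D1 add0e -bigcapU1 !hmuC => -[].
Qed.
From mathcomp Require Import lra.
Lemma subset_toggle (E : finType) (C F : {set E}) (b : E) : b \notin C ->
  (C \subset (if b \in F then F :\ b else b |: F)) = (C \subset F).
Proof.
move=> bC; case: ifP => bF.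
  by rewrite subsetD1 bC andbT.
apply/fintype.subsetP/fintype.subsetP => H e eC.
  have := H e eC; rewrite in_setU1 => /orP[/eqP ee|//].
  by move: bC; rewrite -ee eC.
by rewrite in_setU1 H ?orbT.
Qed.

Lemma sumBi_zero (R : realType) (E : finType) (X : Type)
  (p : {set E} -> X -> R) (x : X)
  (hinv : forall (B0 : {set E}) (b0 : E) (F : {set E}), broken_pair p x B0 b0 ->
       B0 \subset F -> p (b0 |: F) x = p F x)
  (k : nat) (B : 'I_k -> {set E}) (b : 'I_k -> E)
  (hbroken : forall i, broken_pair p x (B i) (b i)) (i : 'I_k) :
  \sum_(F in scriptB_i B b i) (-1) ^+ #|F| * p F x = 0.
Proof.
set S := scriptB_i B b i.
pose t (F : {set E}) := if b i \in F then F :\ b i else b i |: F.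
have bBi : b i \notin B i := proj1 (hbroken i).
have tK : involutive t.
  move=> F; rewrite /t; case bF: (b i \in F).
    by rewrite finset.setD11 finset.setD1K.
  by rewrite finset.setU11 finset.setU1K // bF.
have tS : forall F : {set E}, (t F \in S) = (F \in S).
  move=> F; rewrite /S /scriptB_i !inE subset_toggle //; congr (_ && _).
  apply: eq_forallb => j; congr (_ ==> ~~ _).
  by rewrite subset_toggle // finset.setD11.
have ft : forall F : {set E}, F \in S -> (-1) ^+ #|t F| * p (t F) x = - ((-1) ^+ #|F| * p F x).
  move=> F; rewrite /S /scriptB_i inE => /andP[BF _]; rewrite /t.
  case: ifP => bF.
    have BF' : B i \subset F :\ b i by rewrite subsetD1 BF bBi.
    have pe : p F x = p (F :\ b i) x.
      by rewrite -{1}(finset.setD1K bF) (hinv _ _ _ (hbroken i) BF').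
    rewrite pe.
    by rewrite (cardsD1 (b i) F) bF add1n exprS mulN1r mulNr opprK.
  rewrite (hinv _ _ _ (hbroken i) BF) cardsU1 bF add1n exprS mulN1r mulNr.
  by [].
have h : \sum_(F in S) (-1) ^+ #|F| * p F x = - \sum_(F in S) (-1) ^+ #|F| * p F x.
  rewrite {1}(reindex_inj (inv_inj tK)) /= -sumrN.
  rewrite (eq_bigl (fun F => F \in S)); last by move=> F; rewrite tS.
  by apply: eq_bigr => F FS; rewrite ft.
lra.
Qed.

Theorem corollary1 (R : realType) (E : finType) (X : Type)
  (p : {set E} -> X -> R) (x : X)
  (d : measure_display) (T : measurableType d)
  (mu : {finite_measure set T -> \bar R}) (A : E -> set T)
  (hA : forall e, measurable (A e))
  (hmu : forall F : {set E},
     mu (\bigcap_(e in [set e | e \in F]) A e) = (p F x)%:E)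
  (k : nat) (B : 'I_k -> {set E}) (b : 'I_k -> E)
  (hbroken : forall i, broken_pair p x (B i) (b i)) :
  incl_excl_poly p x =
  \sum_(F : {set E} | F \notin scriptB B b) (-1) ^+ #|F| * p F x.
Proof.
have hinv : forall (B0 : {set E}) (b0 : E) (F : {set E}), broken_pair p x B0 b0 ->
       B0 \subset F -> p (b0 |: F) x = p F x.
  by move=> B0 b0 F hb BF; exact: (@pinv _ _ _ p x _ _ mu A hA hmu B0 b0 hb F BF).
rewrite /incl_excl_poly (bigID (fun F => F \in scriptB B b)) /=.
set P := [set scriptB_i B b i | i : 'I_k].
have -> : scriptB B b = finset.cover P.
  by rewrite cover_imset; apply: eq_bigl => i; rewrite inE.
have tP : finset.trivIset P.
  have key : forall i j : 'I_k, (i < j)%N -> (fintype.disjoint (mem (scriptB_i B b i)) (mem (scriptB_i B b j))).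
    move=> i j ij; rewrite disjoint_subset; apply/fintype.subsetP => F.
    rewrite /scriptB_i !inE => /andP[BF _]; apply/negP => /andP[_ /forallP H].
    have := H i; rewrite ij /= => /negP; apply.
    exact: (fintype.subset_trans (finset.subD1set _ _) BF).
  apply/finset.trivIsetP => A1 A2 /imsetP[i _ ->] /imsetP[j _ ->] neq.
  case: (ltngtP i j) => [ij|ji|ij]; first exact: key.
    by rewrite disjoint_sym; apply: key.
  by move: neq; rewrite (val_inj ij) eqxx.
rewrite finset.big_trivIset // big1 ?add0r //.
by move=> A1 /imsetP[i _ ->]; apply: sumBi_zero.
Qed.
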